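(* Let $R,r>0$ and let $K^{-1/2}_0$ and $\{\mathbb{E}(t)\}_{t\in[-1/2,1/2]}$ be as in the context (touching disks). Then $\{\mathbb{E}(t)\}$ is a resolution of the identity on $K^{-1/2}_0$; namely, $$\langle f,g\rangle_{-1/2}=\int_{-1/2}^{1/2}d\langle f,\mathbb{E}(t)g\rangle_{-1/2}\quad\text{for all } f,g\in K^{-1/2}_0.$$ Moreover, $\lim_{t\to s}\mathbb{E}(t)=\mathbb{E}(s)$ for all $s\in[-1/2,1/2]$ (strongly).
   Context: Identify $\mathbb{R}^2$ with $\mathbb{C}$; for $a\in\mathbb{R}\setminus\{0\}$ let $B_a$ be the open disk of radius $|a|$ centered at $(a,0)$. Fix $R,r>0$, $\Omega=B_R\cup B_{-r}$, $q_1=\frac1{2r}+\frac1{2R}$. For $k\neq0$ let $\mathbb{S}(k)=\frac{1}{2|k|}\mathrm{diag}(1-e^{-|k|q_1},\,1+e^{-|k|q_1})$. $K^{-1/2}_0$ is the Hilbert space of pairs $\hat\varphi=(\hat\varphi_1,\hat\varphi_2)^T$ of measurable complex functions on $\mathbb{R}$ (mod a.e.) with $\int_{\mathbb{R}}\hat\varphi^T\mathbb{S}\overline{\hat\varphi}\,dk<\infty$, inner product $\langle\psi,\varphi\rangle_{-1/2}=\int_{\mathbb{R}}\hat\psi^T\mathbb{S}\overline{\hat\varphi}\,dk$ (in the paper such a pair represents a boundary density on $\partial\Omega$ after pulling back by $z\mapsto1/z$, Fourier transforming and applying $P=\frac1{\sqrt2}\begin{bmatrix}-1&1\\1&1\end{bmatrix}$).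 For $s\in\mathbb{R}\cup\{\infty\}$ let $\mathcal{P}^1(s)(\hat\varphi_1,\hat\varphi_2)=(\chi_{(-\infty,s]}\hat\varphi_1,0)$, $\mathcal{P}^2(s)(\hat\varphi_1,\hat\varphi_2)=(0,\chi_{(-\infty,s]}\hat\varphi_2)$ (with $\chi_{(-\infty,\infty]}\equiv1$), $\mathbb{I}=\mathcal{P}^1(\infty)+\mathcal{P}^2(\infty)$, and $$\mathbb{E}(t)=\begin{cases}\mathcal{P}^2\!\left(-\frac{\ln(-2t)}{q_1}\right)-\mathcal{P}^2\!\left(\frac{\ln(-2t)}{q_1}\right),& t\in[-1/2,0),\\[2pt]\mathcal{P}^1\!\left(\frac{\ln(2t)}{q_1}\right)-\mathcal{P}^1\!\left(-\frac{\ln(2t)}{q_1}\right)+\mathbb{I},& t\in(0,1/2],\end{cases}\qquad \mathbb{E}(0)=\lim_{t\to0^+}\mathbb{E}(t).$$ A resolution of the identity means: each $\mathbb{E}(t)$ is an orthogonal projection, $\mathbb{E}(t)\mathbb{E}(s)=\mathbb{E}(\min(t,s))$, $\mathbb{E}$ is right-continuous, $\mathbb{E}(-1/2)=0$, $\mathbb{E}(1/2)=\mathbb{I}$. *)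

(* Defs.v *)
From HB Require Import structures.
From mathcomp Require Import all_boot all_order all_algebra.
From mathcomp Require Import all_classical all_reals all_analysis.
From mathcomp Require Import complex.
Set Implicit Arguments. Unset Strict Implicit. Unset Printing Implicit Defensive.
Import Order.TTheory GRing.Theory Num.Theory.
Import numFieldNormedType.Exports.
Local Open Scope classical_set_scope.
Local Open Scope ring_scope.
Local Open Scope complex_scope.

Section TouchingDisks.
Variable R : realType.

(* A candidate element of K^{-1/2}_0: a pair (phi_1, phi_2) of complex
   functions on the real line (representative of an a.e.-class). *)
Definition elt := ((R -> R[i]) * (R -> R[i]))%type.

Definition ezero : elt := (fun _ => 0, fun _ => 0).
Definition eadd (f g : elt) : elt := (fun k => f.1 k + g.1 k, fun k => f.2 k + g.2 k).
Definition eopp (f : elt) : elt := (fun k => - f.1 k, fun k => - f.2 k).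
Definition esub (f g : elt) : elt := eadd f (eopp g).
Definition escale (a : R[i]) (f : elt) : elt := (fun k => a * f.1 k, fun k => a * f.2 k).

Definition q1 (Rad r : R) : R := 1 / (2 * r) + 1 / (2 * Rad).

(* diagonal entries of S(k) = 1/(2|k|) diag(1 - e^{-|k| q1}, 1 + e^{-|k| q1})
   (the value at k = 0, a null set, is irrelevant) *)
Definition S11 (q : R) (k : R) : R := (1 - expR (- (`|k| * q))) / (2 * `|k|).
Definition S22 (q : R) (k : R) : R := (1 + expR (- (`|k| * q))) / (2 * `|k|).

Definition sqmod (z : R[i]) : R := complex.Re z ^+ 2 + complex.Im z ^+ 2.

Definition Sform (q : R) (f : elt) (k : R) : R :=
  S11 q k * sqmod (f.1 k) + S22 q k * sqmod (f.2 k).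

Notation leb := (@lebesgue_measure R).

Definition inK (q : R) (f : elt) : Prop :=
  [/\ measurable_fun setT (fun k => complex.Re (f.1 k)),
      measurable_fun setT (fun k => complex.Im (f.1 k)),
      measurable_fun setT (fun k => complex.Re (f.2 k)),
      measurable_fun setT (fun k => complex.Im (f.2 k)) &
      (\int[leb]_(k in setT) (Sform q f k)%:E < +oo)%E].

Definition eqK (f g : elt) : Prop :=
  {ae leb, forall k, f.1 k = g.1 k /\ f.2 k = g.2 k}.

Definition ipw (q : R) (psi phi : elt) (k : R) : R[i] :=
  (S11 q k)%:C * (psi.1 k * conjc (phi.1 k))
  + (S22 q k)%:C * (psi.2 k * conjc (phi.2 k)).

Definition ip (q : R) (psi phi : elt) : R[i] :=
  Complex (\int[leb]_(k in setT) complex.Re (ipw q psi phi k))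
          (\int[leb]_(k in setT) complex.Im (ipw q psi phi k)).

Definition normK (q : R) (f : elt) : R :=
  Num.sqrt (\int[leb]_(k in setT) Sform q f k).

(* characteristic function of (-oo, s], with s = None meaning s = +oo *)
Definition chi (s : option R) (k : R) : R[i] :=
  match s with Some s => if k <= s then 1 else 0 | None => 1 end.

Definition P1 (s : option R) (f : elt) : elt := (fun k => chi s k * f.1 k, fun _ => 0).
Definition P2 (s : option R) (f : elt) : elt := (fun _ => 0, fun k => chi s k * f.2 k).
Definition Iop (f : elt) : elt := eadd (P1 None f) (P2 None f).

(* E(0) := lim_{t -> 0+} E(t) = P^2(oo); that this is indeed the strong limit
   is part of the continuity claim of the theorem. *)
Definition E (q : R) (t : R) (f : elt) : elt :=
  if t < 0 then esub (P2 (Some (- ln (- 2 * t) / q)) f) (P2 (Some (ln (- 2 * t) / q)) f)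
  else if t == 0 then P2 None f
  else eadd (esub (P1 (Some (ln (2 * t) / q)) f) (P1 (Some (- ln (2 * t) / q)) f)) (Iop f).

Definition orth_proj (q : R) (P : elt -> elt) : Prop :=
  [/\ (forall f, inK q f -> inK q (P f)),
      (forall f g, inK q f -> inK q g -> eqK f g -> eqK (P f) (P g)),
      (forall a f g, inK q f -> inK q g ->
          eqK (P (eadd (escale a f) g)) (eadd (escale a (P f)) (P g))),
      (forall f, inK q f -> eqK (P (P f)) (P f)) &
      (forall f g, inK q f -> inK q g -> ip q (P f) g = ip q f (P g))].

Definition in_range (t : R) : Prop := - (1/2) <= t <= 1/2.

End TouchingDisks.

(* Main.v *)
Require Import Defs.
From HB Require Import structures.
From mathcomp Require Import all_boot all_order all_algebra.
From mathcomp Require Import all_classical all_reals all_analysis.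
From mathcomp Require Import complex.
From mathcomp Require Import lra.
From mathcomp Require Import measurable_realfun.
Import Order.TTheory GRing.Theory Num.Theory.
Import numFieldNormedType.Exports.
Local Open Scope ring_scope.
Local Open Scope classical_set_scope.

Section Meas.
Variable R : realType.
Notation leb := (@lebesgue_measure R).

Lemma meas_b2R (b : R -> bool) : measurable_fun setT b ->
  measurable_fun setT (fun k => ((b k)%:R : R)).
Proof.
move=> mb.
have -> : (fun k => ((b k)%:R : R)) = fun k => if b k then 1 else 0.
  by apply/funext => k; case: (b k).
by apply: measurable_fun_ifT => //; exact: measurable_cst.
Qed.

Lemma meas_inv : measurable_fun setT (fun x : R => x^-1).
Proof.
have -> : (fun x : R => x^-1) = fun x => if x == 0 then 0 else x^-1.
  by apply/funext => x; case: eqP => // ->; rewrite invr0.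
apply: measurable_fun_if => //.
- apply: measurable_fun_eqr => //; exact: measurable_cst.
have -> : setT `&` ((fun x : R => x == 0) @^-1` [set false]) = [set x | x != 0].
  by apply/seteqP; split => x /=; [case=> _ /negbT|move=> /negbTE ->].
apply: open_continuous_measurable_fun; first exact: open_neq.
by move=> x; rewrite inE /= => x0; exact: inv_continuous.
Qed.

Lemma negl2 (x : R -> R) s :
  (forall k1 k2, x k1 = s -> x k2 = s -> k2 = k1 \/ k2 = - k1) ->
  leb.-negligible [set k | x k = s].
Proof.
move=> h.
have [[k0 hk0]|nok] := pselect (exists k0, x k0 = s); last first.
  apply: (negligibleS _ (negligible_set0 _)) => k /= hk; apply: nok; by exists k.
have N : leb.-negligible ([set k0] `|` [set - k0]).
  apply: negligibleU; apply/negligibleP; (try exact: measurable_set1);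
    exact: lebesgue_measure_set1.
apply: negligibleS N => k /= hk.
by case: (h _ _ hk0 hk) => ->; [left|right].
Qed.

Lemma small_int (w x : R -> R) s :
  measurable_fun setT w -> (forall k, 0 <= w k) ->
  (\int[leb]_(k in setT) (w k)%:E < +oo)%E ->
  measurable_fun setT x -> leb.-negligible [set k | x k = s] ->
  forall e, 0 < e -> exists2 d, 0 < d &
    (\int[leb]_(k in setT) (((`|x k - s| <= d)%R)%:R * w k)%:E < e%:E)%E.
Proof.
move=> mw w0 wfin mx nx e e0.
pose f_ := fun (n : nat) k => ((((`|x k - s| <= n.+1%:R^-1)%R)%:R * w k)%:E : \bar R).
have mf_ : forall n, measurable_fun setT (f_ n).
  move=> n; apply/measurable_EFinP; apply: measurable_funM => //.
  apply: meas_b2R; apply: measurable_fun_ler; last exact: measurable_cst.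
  apply: measurableT_comp => //; apply: measurable_funB => //; exact: measurable_cst.
have f_f : \forall k \ae leb, setT k -> f_ ^~ k @ \oo --> (cst 0 k : \bar R).
  apply: negligibleS nx => k /= nP; apply: contrapT => hxs; apply: nP => _.
  apply: cvg_near_cst.
  have hpos : 0 < `|x k - s| by rewrite normr_gt0 subr_eq0; apply/eqP.
  apply: filterS (near_infty_natSinv_lt (PosNum hpos)) => n /= hn.
  rewrite /f_; have -> : (`|x k - s| <= n.+1%:R^-1)%R = false.
    by apply/negbTE; rewrite -ltNge.
  by rewrite mul0r.
have ig : leb.-integrable setT (EFin \o w).
  apply/integrableP; split; first exact/measurable_EFinP.
  under eq_integral => k _ do rewrite /comp abse_EFin ger0_norm //.
  exact: wfin.
have f_g : \forall k \ae leb, forall n, setT k -> (`|f_ n k| <= (EFin \o w) k)%E.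
  apply: aeW => k n _; rewrite /f_ /= lee_fin.
  by case: (`|x k - s| <= n.+1%:R^-1)%R; rewrite ?mul1r ?mul0r ?normr0 ?ger0_norm // ?w0.
have [_ _] := @dominated_convergence _ _ _ leb setT measurableT f_ (cst 0) (EFin \o w) mf_ (measurable_cst _) f_f ig f_g.
rewrite integral0 => /fine_cvgP [hfin hc].
have hlt := cvgr_lt 0 hc e e0.
have [N _ /(_ N (leqnn N)) [hN1 hN2]] := filterS2 _ (fun n a b => conj a b) hfin (hlt _).
exists N.+1%:R^-1; first by rewrite invr_gt0 ltr0n.
move: hN1 hN2; rewrite /= /f_ => hN1 hN2; by rewrite -(fineK hN1) lte_fin.
Qed.
End Meas.

Section Helpers.
Context {R : realType} {q : R} (hq : 0 < q).

Definition psi (k : R) : R := expR (- (`|k| * q)) / 2.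
Definition B1 (t k : R) : bool := if 0 < k then psi k < t else psi k <= t.
Definition B2 (t k : R) : bool := if 0 < k then - psi k <= t else - psi k < t.

Lemma chiE (a k : R) : chi (Some a) k = ((k <= a)%R)%:R.
Proof. by rewrite /chi; case: (k <= a). Qed.

Lemma L1 (y k : R) : 0 < y -> (k <= ln y / q) = (expR (k * q) <= y).
Proof. by move=> y0; rewrite ler_pdivlMr // -(ler_expR (k * q)) lnK ?posrE. Qed.

Lemma L2 (y k : R) : 0 < y -> (k <= - ln y / q) = (y <= expR (- (k * q))).
Proof. by move=> y0; rewrite ler_pdivlMr // lerNr -(ler_expR (ln y)) lnK ?posrE. Qed.

Lemma psi_gt0 k : 0 < psi k.
Proof. by rewrite /psi divr_gt0 // expR_gt0. Qed.

Lemma psi_le k : psi k <= 1/2.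
Proof.
have : expR (- (`|k| * q)) <= 1 by rewrite expR_le1 oppr_le0 mulr_ge0 // ltW.
rewrite /psi; lra.
Qed.

Lemma ifE (b : bool) : (if b then 1 else 0 : R[i]) = b%:R.
Proof. by case: b. Qed.

Lemma Eform t (f : elt R) k : in_range t ->
  (E q t f).1 k = (B1 t k)%:R * f.1 k /\ (E q t f).2 k = (B2 t k)%:R * f.2 k.
Proof.
case/andP => tl tu; have p0 := psi_gt0 k; have p1 := psi_le k.
rewrite /E /B1 /B2.
have [t0|t0] := ltP t 0.
  have y0 : 0 < - 2 * t by lra.
  rewrite /= !ifE L1 // L2 //.
  have -> : psi k < t = false by apply/negbTE; rewrite -leNgt; lra.
  have -> : psi k <= t = false by apply/negbTE; rewrite -ltNge; lra.
  rewrite !if_same mul0r subr0; split => //.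
  have [k0|k0] := ltP 0 k.
    move: p0 p1; rewrite /psi gtr0_norm // => p0 p1.
    have -> : (expR (k * q) <= - 2 * t) = false.
      apply/negbTE; rewrite -ltNge.
      have : 1 < expR (k * q) by rewrite expR_gt1 mulr_gt0.
      lra.
    have -> : (- 2 * t <= expR (- (k * q))) = (- (expR (- (k * q)) / 2) <= t).
      apply/idP/idP => h; lra.
    by rewrite mul0r subr0.
  move: p0 p1; rewrite /psi ler0_norm // (mulNr k q) opprK => p0 p1.
  have -> : (- 2 * t <= expR (- (k * q))) = true.
    apply/idP; have : 1 <= expR (- (k * q)).
      by rewrite -expR0 ler_expR oppr_ge0 mulr_le0_ge0 // ltW.
    lra.
  have -> : (expR (k * q) <= - 2 * t) = ~~ (- (expR (k * q) / 2) < t).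
    by rewrite -leNgt; apply/idP/idP => h; lra.
  by case: (_ < t); rewrite /= ?mul1r ?mul0r ?subrr ?subr0.
have [->|tn0] := eqVneq t 0.
  rewrite /=.
  have -> : psi k < 0 = false by apply/negbTE; rewrite -leNgt; lra.
  have -> : psi k <= 0 = false by apply/negbTE; rewrite -ltNge; lra.
  have -> : - psi k <= 0 by lra.
  have -> : - psi k < 0 by lra.
  by rewrite !if_same mul0r mul1r.
have {t0 tn0}t0 : 0 < t by rewrite lt_neqAle eq_sym tn0.
have y0 : 0 < 2 * t by lra.
rewrite /= !ifE L1 // L2 //.
have -> : - psi k <= t by lra.
have -> : - psi k < t by lra.
rewrite !if_same mul1r subr0 !add0r addr0; split => //.
have [k0|k0] := ltP 0 k.
  move: p0 p1; rewrite /psi gtr0_norm // => p0 p1.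
  have -> : (expR (k * q) <= 2 * t) = false.
    apply/negbTE; rewrite -ltNge.
    have : 1 < expR (k * q) by rewrite expR_gt1 mulr_gt0.
    lra.
  have -> : (2 * t <= expR (- (k * q))) = ~~ (expR (- (k * q)) / 2 < t).
    by rewrite -leNgt; apply/idP/idP => h; lra.
  by case: (_ < t); rewrite /= ?mul1r ?mul0r ?subrr ?subr0 ?add0r ?addNr ?addr0.
move: p0 p1; rewrite /psi ler0_norm // (mulNr k q) opprK => p0 p1.
have -> : (2 * t <= expR (- (k * q))) = true.
  apply/idP; have : 1 <= expR (- (k * q)).
    by rewrite -expR0 ler_expR oppr_ge0 mulr_le0_ge0 // ltW.
  lra.
have -> : (expR (k * q) <= 2 * t) = (expR (k * q) / 2 <= t).
  by apply/idP/idP => h; lra.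
by rewrite mul1r subrK.
Qed.
Lemma thr_lt (x t s : R) : (x < t) != (x < s) -> `|x - s| <= `|t - s|.
Proof.
have h1 := ler_norm (t - s); have h2 := ler_norm (s - t).
rewrite distrC in h2.
case: ltP => ?; case: ltP => ? //= _; rewrite ler_norml; apply/andP; split; lra.
Qed.

Lemma thr_le (x t s : R) : (x <= t) != (x <= s) -> `|x - s| <= `|t - s|.
Proof.
have h1 := ler_norm (t - s); have h2 := ler_norm (s - t).
rewrite distrC in h2.
case: leP => ?; case: leP => ? //= _; rewrite ler_norml; apply/andP; split; lra.
Qed.

Lemma B1_thr t s k : B1 t k != B1 s k -> `|psi k - s| <= `|t - s|.
Proof. by rewrite /B1; case: ifP => _; [exact: thr_lt|exact: thr_le]. Qed.

Lemma B2_thr t s k : B2 t k != B2 s k -> `|- psi k - s| <= `|t - s|.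
Proof. by rewrite /B2; case: ifP => _; [exact: thr_le|exact: thr_lt]. Qed.

Lemma in_range_min (t s : R) : in_range t -> in_range s -> in_range (Order.min t s).
Proof. by rewrite /Order.min; case: ifP. Qed.

Lemma B1_min t s k : B1 (Order.min t s) k = B1 t k && B1 s k.
Proof. by rewrite /B1; case: ifP => _; [exact: lt_min|exact: le_min]. Qed.

Lemma B2_min t s k : B2 (Order.min t s) k = B2 t k && B2 s k.
Proof. by rewrite /B2; case: ifP => _; [exact: le_min|exact: lt_min]. Qed.

Lemma psi_lt k : k != 0 -> psi k < 1/2.
Proof.
move=> k0.
have : expR (- (`|k| * q)) < 1.
  by rewrite expR_lt1 oppr_lt0 mulr_gt0 // normr_gt0.
rewrite /psi; lra.
Qed.

Lemma B1_low k : B1 (- (1/2)) k = false.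
Proof.
have := psi_gt0 k; rewrite /B1; case: ifP => _ h; apply/negbTE;
  [rewrite -leNgt|rewrite -ltNge]; lra.
Qed.

Lemma B2_low k : B2 (- (1/2)) k = false.
Proof.
have := psi_le k; rewrite /B2; case: ifP => k0 h; apply/negbTE;
  [rewrite -ltNge|rewrite -leNgt]; try lra.
have := psi_lt k (lt0r_neq0 k0); lra.
Qed.

Lemma B1_high k : B1 (1/2) k.
Proof.
have := psi_le k; rewrite /B1; case: ifP => k0 h //.
exact: psi_lt k (lt0r_neq0 k0).
Qed.

Lemma B2_high k : B2 (1/2) k.
Proof. have := psi_gt0 k; rewrite /B2; case: ifP => _ h; lra. Qed.

Lemma psi_inj k1 k2 : psi k1 = psi k2 -> k2 = k1 \/ k2 = - k1.
Proof.
rewrite /psi => h.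
have h' : expR (- (`|k1| * q)) = expR (- (`|k2| * q)).
  by have := congr1 (fun x => x * 2) h; rewrite !divfK.
move/expR_inj/oppr_inj/(mulIf (lt0r_neq0 hq)): h' => h2.
have [k1p|k1n] := leP 0 k1; have [k2p|k2n] := leP 0 k2.
- by left; rewrite -(ger0_norm k1p) -(ger0_norm k2p) h2.
- by right; rewrite -(ger0_norm k1p) h2 ltr0_norm // opprK.
- by right; rewrite -(ger0_norm k2p) -h2 ltr0_norm.
- by left; rewrite -(opprK k2) -(ltr0_norm k2n) -h2 ltr0_norm // opprK.
Qed.

Lemma meas_psi : measurable_fun setT psi.
Proof.
rewrite /psi; apply: measurable_funM; last exact: measurable_cst.
apply: measurableT_comp; first exact: measurable_expR.
apply: measurable_funN; apply: measurable_funM => //; exact: measurable_cst.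
Qed.

Lemma meas_B1 t : measurable_fun setT (B1 t).
Proof.
rewrite /B1; apply: measurable_fun_ifT.
- apply: measurable_fun_ltr => //; exact: measurable_cst.
- apply: measurable_fun_ltr; [exact: meas_psi|exact: measurable_cst].
- apply: measurable_fun_ler; [exact: meas_psi|exact: measurable_cst].
Qed.

Lemma meas_B2 t : measurable_fun setT (B2 t).
Proof.
rewrite /B2; apply: measurable_fun_ifT.
- apply: measurable_fun_ltr => //; exact: measurable_cst.
- apply: measurable_fun_ler; [apply: measurable_funN; exact: meas_psi|exact: measurable_cst].
- apply: measurable_fun_ltr; [apply: measurable_funN; exact: meas_psi|exact: measurable_cst].
Qed.

Lemma ReMb (b : bool) (z : R[i]) : complex.Re (b%:R * z) = b%:R * complex.Re z.
Proof. by case: b; rewrite ?mul1r ?mul0r. Qed.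

Lemma ImMb (b : bool) (z : R[i]) : complex.Im (b%:R * z) = b%:R * complex.Im z.
Proof. by case: b; rewrite ?mul1r ?mul0r. Qed.

Lemma sqmod0 : sqmod (0 : R[i]) = 0.
Proof. by rewrite /sqmod /= expr0n /= addr0. Qed.

Lemma sqmodN (z : R[i]) : sqmod (- z) = sqmod z.
Proof. by case: z => a c; rewrite /sqmod /= !sqrrN. Qed.

Lemma sqmod_ge0 (z : R[i]) : 0 <= sqmod z.
Proof. by rewrite /sqmod addr_ge0 // sqr_ge0. Qed.

Lemma sqmodMb (b : bool) (z : R[i]) : sqmod (b%:R * z) = b%:R * sqmod z.
Proof. by case: b; rewrite ?mul1r ?mul0r ?sqmod0. Qed.

Lemma S11_ge0 k : 0 <= S11 q k.
Proof.
rewrite /S11 divr_ge0 ?mulr_ge0 //.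
by rewrite subr_ge0 expR_le1 oppr_le0 mulr_ge0 // ltW.
Qed.

Lemma S22_ge0 k : 0 <= S22 q k.
Proof.
by rewrite /S22 divr_ge0 ?mulr_ge0 // addr_ge0 // ltW // expR_gt0.
Qed.

Lemma meas_S11 : measurable_fun setT (S11 q).
Proof.
apply: measurable_funM.
  apply: measurable_funB; first exact: measurable_cst.
  apply: measurableT_comp; first exact: measurable_expR.
  apply: measurable_funN; apply: measurable_funM => //; exact: measurable_cst.
apply: measurableT_comp; first exact: meas_inv.
apply: measurable_funM => //; exact: measurable_cst.
Qed.

Lemma meas_S22 : measurable_fun setT (S22 q).
Proof.
apply: measurable_funM.
  apply: measurable_funD; first exact: measurable_cst.
  apply: measurableT_comp; first exact: measurable_expR.
  apply: measurable_funN; apply: measurable_funM => //; exact: measurable_cst.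
apply: measurableT_comp; first exact: meas_inv.
apply: measurable_funM => //; exact: measurable_cst.
Qed.

Lemma meas_sqmod (g : R -> R[i]) :
  measurable_fun setT (fun k => complex.Re (g k)) ->
  measurable_fun setT (fun k => complex.Im (g k)) ->
  measurable_fun setT (fun k => sqmod (g k)).
Proof.
by move=> h1 h2; rewrite /sqmod; apply: measurable_funD; apply: measurable_funX.
Qed.

Lemma Sform_ge0 f k : 0 <= Sform q f k.
Proof.
by rewrite /Sform addr_ge0 // mulr_ge0 // (S11_ge0, S22_ge0, sqmod_ge0).
Qed.

Lemma meas_Sform (f : elt R) :
  measurable_fun setT (fun k => complex.Re (f.1 k)) ->
  measurable_fun setT (fun k => complex.Im (f.1 k)) ->
  measurable_fun setT (fun k => complex.Re (f.2 k)) ->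
  measurable_fun setT (fun k => complex.Im (f.2 k)) ->
  measurable_fun setT (Sform q f).
Proof.
move=> m1 m2 m3 m4; apply: measurable_funD; apply: measurable_funM.
- exact: meas_S11.
- exact: meas_sqmod.
- exact: meas_S22.
- exact: meas_sqmod.
Qed.

Lemma le_b (b : bool) (x : R) : 0 <= x -> b%:R * x <= x.
Proof. by case: b; rewrite ?mul1r ?mul0r. Qed.

Lemma le_bb (b c : bool) (x : R) : 0 <= x -> (b -> c) -> b%:R * x <= c%:R * x.
Proof.
move=> x0; case: b; case: c => //= h; rewrite ?mul0r ?mul1r //.
by have := h isT.
Qed.

Lemma Sform_E t f k : in_range t ->
  Sform q (E q t f) k = (B1 t k)%:R * (S11 q k * sqmod (f.1 k))
                      + (B2 t k)%:R * (S22 q k * sqmod (f.2 k)).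
Proof.
move=> ht; have [e1 e2] := Eform t f k ht.
by rewrite /Sform e1 e2 !sqmodMb mulrCA [X in _ + X]mulrCA.
Qed.

Lemma Sform_diff t s f k : in_range t -> in_range s ->
  Sform q (esub (E q t f) (E q s f)) k =
    (B1 t k != B1 s k)%:R * (S11 q k * sqmod (f.1 k))
  + (B2 t k != B2 s k)%:R * (S22 q k * sqmod (f.2 k)).
Proof.
move=> ht hs; have [e1 e2] := Eform t f k ht; have [e3 e4] := Eform s f k hs.
rewrite /Sform /esub /eadd /eopp /= e1 e2 e3 e4.
case: (B1 t k); case: (B1 s k); case: (B2 t k); case: (B2 s k);
  rewrite /= ?mul1r ?mul0r ?oppr0 ?addr0 ?add0r ?subrr ?sqmodN ?sqmod0 ?mulr0 ?add0r ?addr0 ?mul0r ?mulr0 ?add0r ?addr0; try done.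
Qed.

Lemma inK_E t f : in_range t -> inK q f -> inK q (E q t f).
Proof.
move=> ht [m1 m2 m3 m4 fin].
have mE1 : measurable_fun setT (fun k => complex.Re ((E q t f).1 k)).
  have -> : (fun k => complex.Re ((E q t f).1 k)) =
            fun k => (B1 t k)%:R * complex.Re (f.1 k).
    by apply/funext => k; rewrite (Eform t f k ht).1 ReMb.
  apply: measurable_funM => //; exact: meas_b2R (meas_B1 t).
have mE2 : measurable_fun setT (fun k => complex.Im ((E q t f).1 k)).
  have -> : (fun k => complex.Im ((E q t f).1 k)) =
            fun k => (B1 t k)%:R * complex.Im (f.1 k).
    by apply/funext => k; rewrite (Eform t f k ht).1 ImMb.
  apply: measurable_funM => //; exact: meas_b2R (meas_B1 t).
have mE3 : measurable_fun setT (fun k => complex.Re ((E q t f).2 k)).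
  have -> : (fun k => complex.Re ((E q t f).2 k)) =
            fun k => (B2 t k)%:R * complex.Re (f.2 k).
    by apply/funext => k; rewrite (Eform t f k ht).2 ReMb.
  apply: measurable_funM => //; exact: meas_b2R (meas_B2 t).
have mE4 : measurable_fun setT (fun k => complex.Im ((E q t f).2 k)).
  have -> : (fun k => complex.Im ((E q t f).2 k)) =
            fun k => (B2 t k)%:R * complex.Im (f.2 k).
    by apply/funext => k; rewrite (Eform t f k ht).2 ImMb.
  apply: measurable_funM => //; exact: meas_b2R (meas_B2 t).
split => //.
apply: le_lt_trans fin; apply: ge0_le_integral => //.
- by move=> k _; rewrite lee_fin; exact: Sform_ge0.
- by apply/measurable_EFinP; exact: meas_Sform.
- by apply/measurable_EFinP; exact: meas_Sform.
move=> k _; rewrite lee_fin Sform_E // /Sform lerD // le_b //.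
  by rewrite mulr_ge0 // (S11_ge0, sqmod_ge0).
by rewrite mulr_ge0 // (S22_ge0, sqmod_ge0).
Qed.

Lemma normK_cont s f e : in_range s -> inK q f -> 0 < e ->
  exists2 d, 0 < d & forall t, in_range t -> `|t - s| < d ->
    normK q (esub (E q t f) (E q s f)) < e.
Proof.
move=> hs [m1 m2 m3 m4 fin] e0.
pose w1 k := S11 q k * sqmod (f.1 k).
pose w2 k := S22 q k * sqmod (f.2 k).
have w1m : measurable_fun setT w1.
  by apply: measurable_funM; [exact: meas_S11|exact: meas_sqmod].
have w2m : measurable_fun setT w2.
  by apply: measurable_funM; [exact: meas_S22|exact: meas_sqmod].
have w10 k : 0 <= w1 k by rewrite mulr_ge0 // (S11_ge0, sqmod_ge0).
have w20 k : 0 <= w2 k by rewrite mulr_ge0 // (S22_ge0, sqmod_ge0).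
have mS : measurable_fun setT (Sform q f) by exact: meas_Sform.
have w1fin : (\int[lebesgue_measure]_(k in setT) (w1 k)%:E < +oo)%E.
  apply: le_lt_trans fin; apply: ge0_le_integral => //.
  - by move=> k _; rewrite lee_fin.
  - exact/measurable_EFinP.
  - exact/measurable_EFinP.
  by move=> k _; rewrite lee_fin /Sform lerDl mulr_ge0 // (S22_ge0, sqmod_ge0).
have w2fin : (\int[lebesgue_measure]_(k in setT) (w2 k)%:E < +oo)%E.
  apply: le_lt_trans fin; apply: ge0_le_integral => //.
  - by move=> k _; rewrite lee_fin.
  - exact/measurable_EFinP.
  - exact/measurable_EFinP.
  by move=> k _; rewrite lee_fin /Sform lerDr mulr_ge0 // (S11_ge0, sqmod_ge0).
have e2 : 0 < e ^+ 2 / 2 by rewrite divr_gt0 // exprn_gt0.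
have n1 : (@lebesgue_measure R).-negligible [set k | psi k = s].
  by apply: negl2 => k1 k2 h1 h2; apply: psi_inj; rewrite h1 h2.
have n2 : (@lebesgue_measure R).-negligible [set k | (fun k => - psi k) k = s].
  apply: negl2 => k1 k2 /= h1 h2; apply: psi_inj.
  by apply: oppr_inj; rewrite h1 h2.
have [d1 d1p H1] := small_int _ _ _ _ w1m w10 w1fin meas_psi n1 _ e2.
have [d2 d2p H2] := small_int _ _ _ _ w2m w20 w2fin (measurable_funN meas_psi) n2 _ e2.
exists (Order.min d1 d2); first by rewrite lt_min d1p d2p.
move=> t ht; rewrite lt_min => /andP[hd1 hd2].
pose g1 k := ((`|psi k - s| <= d1)%R)%:R * w1 k.
pose g2 k := ((`|- psi k - s| <= d2)%R)%:R * w2 k.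
have g1m : measurable_fun setT g1.
  apply: measurable_funM => //; apply: meas_b2R; apply: measurable_fun_ler;
    last exact: measurable_cst.
  apply: measurableT_comp => //; apply: measurable_funB; [exact: meas_psi|exact: measurable_cst].
have g2m : measurable_fun setT g2.
  apply: measurable_funM => //; apply: meas_b2R; apply: measurable_fun_ler;
    last exact: measurable_cst.
  apply: measurableT_comp => //; apply: measurable_funB;
    [apply: measurable_funN; exact: meas_psi|exact: measurable_cst].
have g10 k : 0 <= g1 k by rewrite /g1 mulr_ge0 // ler0n.
have g20 k : 0 <= g2 k by rewrite /g2 mulr_ge0 // ler0n.
set h := esub (E q t f) (E q s f).
have hm : measurable_fun setT (Sform q h).
  have -> : Sform q h = fun k => ((B1 t k)%:R - (B1 s k)%:R) ^+ 2 * w1 k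
                               + ((B2 t k)%:R - (B2 s k)%:R) ^+ 2 * w2 k.
    apply/funext => k; rewrite /h Sform_diff //.
    by case: (B1 t k); case: (B1 s k); case: (B2 t k); case: (B2 s k);
      rewrite /= ?subrr ?subr0 ?sub0r ?sqrrN ?expr0n ?expr1n.
  apply: measurable_funD; apply: measurable_funM => //; apply: measurable_funX;
    apply: measurable_funB; apply: meas_b2R; (exact: meas_B1 || exact: meas_B2).
have hI : (\int[lebesgue_measure]_(k in setT) (Sform q h k)%:E <
           (e ^+ 2)%:E)%E.
  apply: (@le_lt_trans _ _ (\int[lebesgue_measure]_(k in setT) ((g1 k)%:E + (g2 k)%:E))%E).
    apply: ge0_le_integral => //.
    - by move=> k _; rewrite lee_fin; exact: Sform_ge0.
    - exact/measurable_EFinP.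
    - by apply: emeasurable_funD; apply/measurable_EFinP.
    move=> k _; rewrite -EFinD lee_fin /h Sform_diff // lerD //.
      apply: le_bb; first exact: w10. by move=> /B1_thr h1; apply: le_trans h1 _; exact: ltW.
    apply: le_bb; first exact: w20. by move=> /B2_thr h1; apply: le_trans h1 _; exact: ltW.
  rewrite ge0_integralD //; last 4 first.
  - by move=> k _; rewrite lee_fin.
  - exact/measurable_EFinP.
  - by move=> k _; rewrite lee_fin.
  - exact/measurable_EFinP.
  rewrite [X in (_ < X%:E)%E](splitr (e ^+ 2)).
  by rewrite EFinD lteD.
have I0 : (0 <= \int[lebesgue_measure]_(k in setT) (Sform q h k)%:E)%E.
  by apply: integral_ge0 => k _; rewrite lee_fin; exact: Sform_ge0.
have Ifin : (\int[lebesgue_measure]_(k in setT) (Sform q h k)%:E)%E \is a fin_num.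
  by rewrite ge0_fin_numE // (lt_trans hI) // ltry.
rewrite /normK /Rintegral.
rewrite -[X in _ < X](gtr0_norm e0) -sqrtr_sqr ltr_sqrt ?exprn_gt0 //.
by rewrite -lte_fin fineK.
Qed.

Lemma in_range_half : in_range (1/2 : R).
Proof. apply/andP; split; lra. Qed.

Lemma in_range_mhalf : in_range (- (1/2) : R).
Proof. apply/andP; split; lra. Qed.

Lemma ipw_E t f g k : in_range t -> ipw q (E q t f) g k = ipw q f (E q t g) k.
Proof.
move=> ht; have [a1 a2] := Eform t f k ht; have [b1 b2] := Eform t g k ht.
rewrite /ipw a1 a2 b1 b2.
by case: (B1 t k); case: (B2 t k); rewrite ?mul1r ?mul0r ?conjc0 ?mulr0.
Qed.

Lemma ip_E t f g : in_range t -> ip q (E q t f) g = ip q f (E q t g).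
Proof.
move=> ht; rewrite /ip.
have -> : ipw q (E q t f) g = ipw q f (E q t g).
  by apply/funext => k; exact: ipw_E.
by [].
Qed.

Lemma ip_half f g : ip q f g = ip q f (E q (1/2) g) - ip q f (E q (- (1/2)) g).
Proof.
rewrite /ip.
have -> : ipw q f (E q (1/2) g) = ipw q f g.
  apply/funext => k; have [b1 b2] := Eform (1/2) g k in_range_half.
  by rewrite /ipw b1 b2 B1_high B2_high !mul1r.
have -> : ipw q f (E q (- (1/2)) g) = fun _ => 0.
  apply/funext => k; have [b1 b2] := Eform (- (1/2)) g k in_range_mhalf.
  by rewrite /ipw b1 b2 B1_low B2_low !mul0r conjc0 !mulr0 addr0.

have -> : (fun k : R => complex.Re ((fun _ : R => (0 : R[i])) k)) = fun _ => 0 by [].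
rewrite Rintegral_cst // mul0r.
have -> : Complex (0:R) 0 = 0 by [].
by rewrite subr0.
Qed.

Lemma bF (z : R[i]) : false%:R * z = 0. Proof. by rewrite mul0r. Qed.
Lemma bT (z : R[i]) : true%:R * z = z. Proof. by rewrite mul1r. Qed.

Lemma eadd1 (x y : elt R) k : (eadd x y).1 k = x.1 k + y.1 k. Proof. by []. Qed.
Lemma eadd2 (x y : elt R) k : (eadd x y).2 k = x.2 k + y.2 k. Proof. by []. Qed.
Lemma escale1 a (x : elt R) k : (escale a x).1 k = a * x.1 k. Proof. by []. Qed.
Lemma escale2 a (x : elt R) k : (escale a x).2 k = a * x.2 k. Proof. by []. Qed.

Lemma E_lin t a f g k : in_range t ->
  (E q t (eadd (escale a f) g)).1 k = (eadd (escale a (E q t f)) (E q t g)).1 k /\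
  (E q t (eadd (escale a f) g)).2 k = (eadd (escale a (E q t f)) (E q t g)).2 k.
Proof.
move=> ht; have [a1 a2] := Eform t (eadd (escale a f) g) k ht.
have [b1 b2] := Eform t f k ht; have [c1 c2] := Eform t g k ht.
rewrite a1 a2 !eadd1 !eadd2 !escale1 !escale2 b1 b2 c1 c2.
by split; rewrite mulrDr mulrCA.
Qed.

End Helpers.

Theorem proposition4p3 (R : realType) (Rad r : R) (hR : 0 < Rad) (hr : 0 < r) :
  let q := q1 Rad r in
  (* each E(t) is an orthogonal projection *)
      (forall t, in_range t -> orth_proj q (E q t)) /\
      (* E(t) E(s) = E(min(t,s)) *)
      (forall t s, in_range t -> in_range s -> forall f, inK q f ->
          eqK (E q t (E q s f)) (E q (Order.min t s) f)) /\
      (* E(-1/2) = 0 and E(1/2) = I *)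
      (forall f, inK q f -> eqK (E q (- (1/2)) f) (@ezero R)) /\
      (forall f, inK q f -> eqK (E q (1/2) f) (Iop f)) /\
      (* <f,g> = int_{-1/2}^{1/2} d<f, E(t) g>  (= <f,E(1/2)g> - <f,E(-1/2)g>) *)
      (forall f g, inK q f -> inK q g ->
          ip q f g = ip q f (E q (1/2) g) - ip q f (E q (- (1/2)) g)) /\
      (* right-continuity (strong) *)
      (forall s, in_range s -> forall f, inK q f -> forall e, 0 < e ->
          exists2 d, 0 < d & forall t, in_range t -> s <= t -> t - s < d ->
            normK q (esub (E q t f) (E q s f)) < e) /\
      (* lim_{t -> s} E(t) = E(s) strongly, for all s in [-1/2,1/2] *)
      (forall s, in_range s -> forall f, inK q f -> forall e, 0 < e ->
          exists2 d, 0 < d & forall t, in_range t -> `|t - s| < d ->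
            normK q (esub (E q t f) (E q s f)) < e).
Proof.
move=> q.
have hq : 0 < q by rewrite /q /q1 addr_gt0 // divr_gt0 // mulr_gt0.
split; [|split; [|split; [|split; [|split; [|split]]]]].
- move=> t ht; split.
  + by move=> f; exact: inK_E.
  + move=> f g _ _ H; apply: negligibleS H => k /= nQ [h1 h2]; apply: nQ.
    have [a1 a2] := Eform hq t f k ht; have [b1 b2] := Eform hq t g k ht.
    by rewrite a1 a2 b1 b2 h1 h2.
  + by move=> a f g _ _; apply: aeW => k; exact: E_lin.
  + move=> f _; apply: aeW => k.
    have [a1 a2] := Eform hq t (E q t f) k ht; have [b1 b2] := Eform hq t f k ht.
    rewrite a1 a2 b1 b2.
    by case: (B1 t k); case: (B2 t k); split; rewrite /= ?mul1r ?mul0r ?mulr0.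
  + by move=> f g _ _; exact: ip_E.
- move=> t s ht hs f _; apply: aeW => k.
  have [a1 a2] := Eform hq t (E q s f) k ht; have [b1 b2] := Eform hq s f k hs.
  have [c1 c2] := Eform hq (Order.min t s) f k (in_range_min _ _ ht hs).
  rewrite a1 a2 b1 b2 c1 c2 (B1_min (q:=q)) (B2_min (q:=q)).
  by case: (B1 t k); case: (B1 s k); case: (B2 t k); case: (B2 s k);
    split; rewrite /= ?mul1r ?mul0r ?mulr0.
- move=> f _; apply: aeW => k.
  have [a1 a2] := Eform hq (- (1/2)) f k in_range_mhalf.
  by rewrite a1 a2 B1_low B2_low //; split; rewrite /= ?mul0r.
- move=> f _; apply: aeW => k.
  have [a1 a2] := Eform hq (1/2) f k in_range_half.
  by rewrite a1 a2 (B1_high hq k) (B2_high (q:=q) k); split; rewrite /= ?mul1r ?addr0 ?add0r.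
- by move=> f g _ _; exact: ip_half.
- move=> s hs f hf e e0; have [d dp H] := normK_cont hq _ _ _ hs hf e0.
  exists d => // t ht st tsd; apply: H => //.
  by rewrite ger0_norm // subr_ge0.
- move=> s hs f hf e e0; exact: normK_cont hq _ _ _ hs hf e0.
Qed.
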